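(* Let $K\subset\mathbb{R}^d$ be compact, let $m\ge1$, let $k_1,\dots,k_m\ge 0$ be integers, let $\alpha_1,\dots,\alpha_m\in\mathbb{R}$, and for each $i$ let $h^{(k_i)}$ be a $k_i$-order hinge function on $\mathbb{R}^d$. Then there exists a two-layer Morph-Net all of whose morphological neurons are dilation neurons (no erosion neurons) whose output $N({\bm{x}})$ satisfies $N({\bm{x}})=\sum_{i=1}^m\alpha_i h^{(k_i)}({\bm{x}})$ for all ${\bm{x}}\in K$.
   Context: For ${\bm{x}}\in\mathbb{R}^p$ write ${\bm{x}}'=(x_1,\dots,x_p,0)\in\mathbb{R}^{p+1}$ (augmented input). For a structuring element ${\bm{s}}\in\mathbb{R}^{p+1}$, the dilation neuron computes ${\bm{x}}\oplus{\bm{s}}=\max_{1\le k\le p+1}(x'_k+s_k)$ and the erosion neuron computes ${\bm{x}}\ominus{\bm{s}}=\min_{1\le k\le p+1}(x'_k-s_k)$. A dilation-erosion layer applied to ${\bm{y}}\in\mathbb{R}^p$ consists of finitely many dilation and erosion neurons (each with its own structuring element in $\mathbb{R}^{p+1}$) all applied to ${\bm{y}}$, and outputs the vector of their values. A linear combination layer is an affine map ${\bm{z}}\mapsto A{\bm{z}}+{\bm{c}}$. A two-layer Morph-Net $N:\mathbb{R}^d\to\mathbb{R}$ is the composition: dilation-erosion layer on ${\bm{x}}\in\mathbb{R}^d$, then a linear combination layer, then a second dilation-erosion layer applied to the resulting vector, then a linear combination layer with a single real output. A $k$-order hinge function on $\mathbb{R}^d$ is a function of the form $h^{(k)}({\bm{x}})=\pm\max\{{\bm{w}}_1^\top{\bm{x}}+b_1,\dots,{\bm{w}}_{k+1}^\top{\bm{x}}+b_{k+1}\}$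 with ${\bm{w}}_r\in\mathbb{R}^d$, $b_r\in\mathbb{R}$. *)

(* Defs.v *)
From Stdlib Require Import Reals.
From mathcomp Require Import ssreflect ssrfun ssrbool eqtype ssrnat seq choice fintype.
Set Warnings "-notation-overridden".
Set Implicit Arguments. Unset Strict Implicit. Unset Printing Implicit Defensive.
Local Open Scope R_scope.

Definition vec (n : nat) := 'I_n -> R.

Definition sumI (n : nat) (f : 'I_n -> R) : R :=
  foldr (fun j acc => f j + acc) 0 (enum 'I_n).
Definition maxI (n : nat) (f : 'I_n.+1 -> R) : R :=
  foldr (fun j acc => Rmax (f j) acc) (f ord0) (enum 'I_n.+1).

Definition dot (n : nat) (w x : vec n) : R := sumI (fun j => w j * x j).

(* augmented input x' = (x_1, ..., x_p, 0) in R^(p+1) *)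
Definition augment (p : nat) (x : vec p) : vec p.+1 :=
  fun k => match unlift ord_max k with
           | Some j => x j
           | None => 0
           end.

Definition dilation (p : nat) (x : vec p) (s : vec p.+1) : R :=
  maxI (fun k => augment x k + s k).
Definition erosion (p : nat) (x : vec p) (s : vec p.+1) : R :=
  - maxI (fun k => - (augment x k - s k)).
(* erosion = min_k (x'_k - s_k), written as -max(-(.)) *)

Inductive neuron_kind := Dil | Ero.

Definition neuron (p : nat) (kd : neuron_kind) (s : vec p.+1) (x : vec p) : R :=
  match kd with Dil => dilation x s | Ero => erosion x s end.

Definition de_layer (p n : nat) (kind : 'I_n -> neuron_kind)
  (S : 'I_n -> vec p.+1) (y : vec p) : vec n :=
  fun i => neuron (kind i) (S i) y.

Definition lin_layer (n m : nat) (A : 'I_m -> 'I_n -> R) (c : vec m) (z : vec n)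
  : vec m := fun i => dot (A i) z + c i.

Unset Implicit Arguments.
Record MorphNet (d : nat) := {
  mn_n1 : nat;
  mn_n2 : nat;
  mn_n3 : nat;
  mn_kind1 : 'I_mn_n1 -> neuron_kind;
  mn_S1 : 'I_mn_n1 -> vec d.+1;
  mn_A : 'I_mn_n2 -> 'I_mn_n1 -> R;
  mn_c : vec mn_n2;
  mn_kind2 : 'I_mn_n3 -> neuron_kind;
  mn_S2 : 'I_mn_n3 -> vec mn_n2.+1;
  mn_w : vec mn_n3;
  mn_b : R
}.
Arguments mn_n1 {d}. Arguments mn_n2 {d}. Arguments mn_n3 {d}.
Arguments mn_kind1 {d}. Arguments mn_S1 {d}. Arguments mn_A {d}. Arguments mn_c {d}.
Arguments mn_kind2 {d}. Arguments mn_S2 {d}. Arguments mn_w {d}. Arguments mn_b {d}.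
Set Implicit Arguments.

Definition mn_eval (d : nat) (N : MorphNet d) (x : vec d) : R :=
  let z1 := de_layer (mn_kind1 N) (mn_S1 N) x in
  let y1 := lin_layer (mn_A N) (mn_c N) z1 in
  let z2 := de_layer (mn_kind2 N) (mn_S2 N) y1 in
  dot (mn_w N) z2 + mn_b N.

Definition only_dilations (d : nat) (N : MorphNet d) : Prop :=
  (forall i, mn_kind1 N i = Dil) /\ (forall i, mn_kind2 N i = Dil).

Definition hinge (d k : nat) (neg : bool) (W : 'I_k.+1 -> vec d) (B : 'I_k.+1 -> R)
  (x : vec d) : R :=
  let v := maxI (fun r => dot (W r) x + B r) in
  if neg then - v else v.

Definition is_hinge (d k : nat) (h : vec d -> R) : Prop :=
  exists (neg : bool) (W : 'I_k.+1 -> vec d) (B : 'I_k.+1 -> R),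
    forall x, h x = hinge neg W B x.

Definition open_set (d : nat) (U : vec d -> Prop) : Prop :=
  forall x, U x -> exists eps, 0 < eps /\
    forall y : vec d, (forall j, Rabs (y j - x j) < eps) -> U y.

Definition compact_set (d : nat) (K : vec d -> Prop) : Prop :=
  forall (I : Type) (U : I -> vec d -> Prop),
    (forall i, open_set (U i)) ->
    (forall x, K x -> exists i, U i x) ->
    exists (n : nat) (f : 'I_n -> I), forall x, K x -> exists j, U (f j) x.

(* Main.v *)
Require Import Defs.
From Stdlib Require Import Reals Lra IndefiniteDescription.
From mathcomp Require Import ssreflect ssrfun ssrbool eqtype ssrnat seq choice fintype bigop.
Set Implicit Arguments.
Local Open Scope R_scope.

Lemma sumI_ext n (f g : 'I_n -> R) : (forall j, f j = g j) -> sumI f = sumI g.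
Proof. move=> H; rewrite /sumI; elim: (enum 'I_n) => //= a l ->; by rewrite H. Qed.

Lemma sumI_ge n (g : 'I_n -> R) j0 : (forall j, 0 <= g j) -> g j0 <= sumI g.
Proof.
move=> H; rewrite /sumI.
have Hnn : forall l, 0 <= foldr (fun j acc => g j + acc) 0 l.
  elim => /=; [lra| move=> b l Hb; have := H b; lra].
have: j0 \in enum 'I_n by rewrite mem_enum.
elim: (enum 'I_n) => //= a l IH; rewrite in_cons => /orP [/eqP <-|Hl].
- have := Hnn l; lra.
- have := IH Hl; have := H a; lra.
Qed.

Lemma sumI_abs n (f g : 'I_n -> R) : (forall j, Rabs (f j) <= g j) -> Rabs (sumI f) <= sumI g.
Proof.
move=> H; rewrite /sumI; elim: (enum 'I_n) => /=; first by rewrite Rabs_R0; lra.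
move=> a l IH; apply: Rle_trans (Rabs_triang _ _) _; have := H a; lra.
Qed.

Lemma maxI_ub n (f : 'I_n.+1 -> R) j : f j <= maxI f.
Proof.
rewrite /maxI; have: j \in enum 'I_n.+1 by rewrite mem_enum.
elim: (enum 'I_n.+1) => //= a l IH; rewrite in_cons => /orP [/eqP <-|Hl].
- apply: Rmax_l.
- apply: Rle_trans (IH Hl) (Rmax_r _ _).
Qed.

Lemma maxI_att n (f : 'I_n.+1 -> R) : exists j, maxI f = f j.
Proof.
rewrite /maxI; elim: (enum 'I_n.+1) => /=; first by exists ord0.
move=> a l [j Hj]; rewrite Hj; case: (Rle_dec (f a) (f j)) => Hc.
- exists j; by rewrite Rmax_right.
- exists a; rewrite Rmax_left //; lra.
Qed.

Lemma maxI_eq n (f : 'I_n.+1 -> R) v :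
  (forall j, f j <= v) -> (exists j, f j = v) -> maxI f = v.
Proof.
move=> H [j Hj]; case: (maxI_att f) => j1 E.
apply: Rle_antisym; first by rewrite E.
rewrite -Hj; apply: maxI_ub.
Qed.

Lemma dot_ext n (w x y : vec n) : (forall j, x j = y j) -> dot w x = dot w y.
Proof. move=> H; apply: sumI_ext => j; by rewrite H. Qed.

Lemma dot_bound n (w x : vec n) c : (forall j, Rabs (x j) <= c) ->
  Rabs (dot w x) <= sumI (fun j => Rabs (w j) * c).
Proof.
move=> H; apply: sumI_abs => j; rewrite Rabs_mult.
apply: Rmult_le_compat_l; [apply: Rabs_pos | apply: H].
Qed.

Lemma augment_lift p (x : vec p) j : augment x (lift ord_max j) = x j.
Proof. by rewrite /augment liftK. Qed.

Lemma absle a b : Rabs a <= b -> -b <= a /\ a <= b.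
Proof. split_Rabs; lra. Qed.

Lemma sumI_nonneg n (g : 'I_n -> R) : (forall j, 0 <= g j) -> 0 <= sumI g.
Proof. move=> H; rewrite /sumI; elim: (enum 'I_n) => /=; [lra| move=> b l Hb; have := H b; lra]. Qed.

Lemma bound_of_compact d (K : vec d -> Prop) : compact_set K ->
  exists Bx, 0 <= Bx /\ forall x, K x -> forall j, Rabs (x j) <= Bx.
Proof.
move=> HK.
pose U := fun (c : R) (y : vec d) => exists eps, 0 < eps /\ forall z : vec d,
   (forall j, Rabs (z j - y j) < eps) -> forall j, Rabs (z j) < c.
have [n [f Hf]] : exists n (f : 'I_n -> R), forall x, K x -> exists j, U (f j) x.
  apply: HK.
  move=> c y [eps [He Hz]]; exists (eps/2); split; first lra.
  move=> z Hzy; exists (eps/2); split; first lra.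
  move=> w Hw; apply: Hz => j.
  replace (w j - y j) with ((w j - z j) + (z j - y j)) by ring.
  apply: Rle_lt_trans (Rabs_triang _ _) _; have := Hw j; have := Hzy j; lra.
  move=> x _; exists (sumI (fun j => Rabs (x j)) + 1); exists 1; split; first lra.
  move=> z Hz j; replace (z j) with ((z j - x j) + x j) by ring.
  apply: Rle_lt_trans (Rabs_triang _ _) _.
  have := Hz j; have := @sumI_ge _ (fun j => Rabs (x j)) j (fun j => Rabs_pos _); lra.
exists (sumI (fun j => Rabs (f j))); split; first by apply: sumI_nonneg => j; apply: Rabs_pos.
move=> x Kx j; have [j' [eps [He Hz]]] := Hf x Kx.
have := Hz x (fun j => ltac:(rewrite Rminus_diag Rabs_R0; exact He)) j.
have := @sumI_ge _ (fun j => Rabs (f j)) j' (fun j => Rabs_pos _).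
have := Rle_abs (f j'); lra.
Qed.

Unset Implicit Arguments.

Theorem lemma1 (d : nat) (K : vec d -> Prop) (m : nat)
  (k : 'I_m -> nat) (alpha : 'I_m -> R) (h : 'I_m -> vec d -> R) :
  compact_set K ->
  (0 < m)%N ->
  (forall i, is_hinge (k i) (h i)) ->
  exists N : MorphNet d, only_dilations N /\
    forall x, K x -> mn_eval N x = sumI (fun i => alpha i * h i x).
Proof.
move=> HK _ Hh.
have [Bx [Bx0 HBx]] := bound_of_compact HK.
have HC : forall i, {p : bool * (('I_(k i).+1 -> vec d) * ('I_(k i).+1 -> R)) |
   forall x, h i x = hinge p.1 p.2.1 p.2.2 x}.
  move=> i; apply: constructive_indefinite_description.
  have [ng [W [B HW]]] := Hh i; by exists (ng, (W, B)).
pose ng := fun i => (sval (HC i)).1.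
pose W := fun i => (sval (HC i)).2.1.
pose Bf := fun i => (sval (HC i)).2.2.
have Hh' : forall i x, h i x = hinge (ng i) (W i) (Bf i) x.
  move=> i x; exact: (proj2_sig (HC i) x).
pose Kmax := (\max_(i < m) k i)%N.
have HkK : forall i, (k i <= Kmax)%N by move=> i; apply: leq_bigmax.
pose T := ('I_m * 'I_Kmax.+1)%type.
pose n2 := #|{: T}|.
pose W' := fun q : 'I_n2 => W (enum_val q).1 (inord (enum_val q).2).
pose B' := fun q : 'I_n2 => Bf (enum_val q).1 (inord (enum_val q).2).
pose Ba := sumI (fun q : 'I_n2 => sumI (fun j => Rabs (W' q j) * Bx) + Rabs (B' q)).
pose M1 := 2 * Bx + 1.
pose M2 := 2 * Ba + 1.
pose S1 := fun (j : 'I_d) (kk : 'I_d.+1) => match unlift ord_max kk with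
   Some j' => if j' == j then 0 else - M1 | None => - M1 end.
pose S2 := fun (i : 'I_m) (kk : 'I_n2.+1) => match unlift ord_max kk with
   Some q => if (enum_val q).1 == i then 0 else - M2 | None => - M2 end.
pose wout := fun i => alpha i * (if ng i then -1 else 1).
exists (@Build_MorphNet d d n2 m (fun _ => Dil) S1 W' B' (fun _ => Dil) S2 wout 0).
split; first by split.
move=> x Kx.
have HB := HBx x Kx.
have Z1 : forall j, de_layer (fun _ => Dil) S1 x j = x j.
  move=> j; rewrite /de_layer /neuron /dilation; apply: maxI_eq.
  - move=> kk; rewrite /augment /S1; case: (unlift ord_max kk) => [j'|].
    + case: eqP => [->|_]; first lra.
      have := @absle _ _ (HB j); have := @absle _ _ (HB j'); rewrite /M1; lra.
    + have := @absle _ _ (HB j); rewrite /M1; lra.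
  - exists (lift ord_max j); rewrite /augment /S1 liftK eqxx; ring.
pose aff := fun q : 'I_n2 => dot (W' q) x + B' q.
have Y1 : forall q, lin_layer W' B' (de_layer (fun _ => Dil) S1 x) q = aff q.
  move=> q; by rewrite /lin_layer (@dot_ext _ (W' q) _ _ Z1).
have Hba : forall q, Rabs (aff q) <= Ba.
  move=> q; rewrite /Ba.
  apply: Rle_trans (@sumI_ge _ (fun q : 'I_n2 => sumI (fun j => Rabs (W' q j) * Bx) + Rabs (B' q)) q _).
  - apply: Rle_trans (Rabs_triang _ _) _; apply: Rplus_le_compat_r; exact: dot_bound.
  - move=> q'; have := Rabs_pos (B' q').
    have : 0 <= sumI (fun j => Rabs (W' q' j) * Bx).
      apply: sumI_nonneg => j; apply: Rmult_le_pos => //; exact: Rabs_pos.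
    lra.
pose V := fun i => maxI (fun r => dot (W i r) x + Bf i r).
have HV : forall i, - Ba <= V i.
  move=> i; apply: (Rle_trans _ _ _ _ (maxI_ub (fun r => dot (W i r) x + Bf i r) ord0)).
  have := @absle _ _ (Hba (enum_rank (i, (inord 0 : 'I_Kmax.+1)))).
  rewrite /aff /W' /B' enum_rankK /=.
  have -> : (inord (inord 0 : 'I_Kmax.+1) : 'I_(k i).+1) = ord0.
    apply: val_inj; rewrite /= inordK // inordK //.
  lra.
have Z2 : forall i, de_layer (fun _ => Dil) S2
   (lin_layer W' B' (de_layer (fun _ => Dil) S1 x)) i = V i.
  move=> i; rewrite /de_layer /neuron /dilation; apply: maxI_eq.
  - move=> kk; rewrite /augment /S2; case: (unlift ord_max kk) => [q|].
    + rewrite Y1; have := @absle _ _ (Hba q); rewrite /aff /W' /B'.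
      case: (enum_val q) => i' r /=.
      case: eqP => [Ei|_].
      * subst i'; move=> _; rewrite Rplus_0_r; exact: (maxI_ub (fun r0 => dot (W i r0) x + Bf i r0)).
      * have := HV i; rewrite /M2; lra.
    + have := HV i; have := Rle_trans _ _ _ (Rabs_pos _) (Hba (enum_rank (i, (ord0 : 'I_Kmax.+1)))); rewrite /M2; lra.
  - have [r0 Hr0] := maxI_att (fun r => dot (W i r) x + Bf i r).
    exists (lift ord_max (enum_rank (i, (inord r0 : 'I_Kmax.+1)))).
    rewrite /augment /S2 liftK Y1 /aff /W' /B' enum_rankK /= eqxx.
    have -> : (inord (inord r0 : 'I_Kmax.+1) : 'I_(k i).+1) = r0.
      apply: val_inj; rewrite /= inordK ?inordK //.
      all: try (by apply: leq_trans (ltn_ord r0) _; rewrite ltnS).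
      all: try (by apply: ltn_ord).
    by rewrite Rplus_0_r -Hr0.
rewrite /mn_eval /= Rplus_0_r; apply: sumI_ext => i.
rewrite Z2 Hh' /hinge /wout -/(V i); case: (ng i); ring.
Qed.
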